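(* Let $K$ be a field of characteristic zero, $m\in K[x,y]$ irreducible over $K(x)$ with $n=\deg_y(m)$, and $A=K(x)[y]/\langle m\rangle$ equipped with the derivation $'$ extending $d/dx$. Let $W=(\omega_1,\dots,\omega_n)$ be a suitable basis of $A$ with $e\in K[x]$, $M=(m_{i,j})\in K[x]^{n\times n}$ such that $eW'=MW$ and $\gcd(e,m_{1,1},\dots,m_{n,n})=1$. Let $h=\sum_{i=1}^n\frac{h_i}{de}\omega_i$ with $h_1,\dots,h_n,d\in K[x]$, $\gcd(d,e)=\gcd(h_1,\dots,h_n,d)=1$ and $d$ squarefree. If $h$ is integrable in $A$, then $d\in K$.
   Context: $h$ is integrable in $A$ if $h=H'$ for some $H\in A$. An element $f\in A$ is integral if for every $a\in\bar K$ (algebraic closure of $K$) all $n$ Puiseux series expansions $\sigma_i(f)\in\bigcup_{r\ge1}\bar K((\,(x-a)^{1/r}))$ of $f$ at $a$ (obtained by substituting the $n$ Puiseux roots of $m$ at $a$ for $y$) have nonnegative valuation (least exponent). A suitable basis is a $K(x)$-basis of $A$ consisting of integral elements for which the normalized $e$ above is squarefree. *)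

(* Defs.v *)
From HB Require Import structures.
From mathcomp Require Import all_boot all_order all_algebra.
Set Implicit Arguments. Unset Strict Implicit. Unset Printing Implicit Defensive.
Import GRing.Theory.
Local Open Scope ring_scope.

(* K(x) = {fraction {poly K}}, A = K(x)[y]/<m> represented by
   polynomials in y over K(x), compared modulo m. *)

Section AlgFun.
Variable K : fieldType.

Notation Kx := {poly K}.
Notation F := {fraction {poly K}}.

Definition toF (p : Kx) : F := @tofrac _ p.

Definition derivF (f : F) : F :=
  let r := repr f in
  toF ((\n_r)^`() * \d_r - \n_r * (\d_r)^`()) / toF (\d_r ^+ 2).

Definition liftm (m : {poly Kx}) : {poly F} := map_poly toF m.

(* inverse of a modulo mm (via Bezout), meaningful when a, mm coprime *)
Definition invmod (a mm : {poly F}) : {poly F} :=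
  let e := egcdp a mm in ((e.1 * a + e.2 * mm)`_0)^-1 *: e.1.

Definition eqA (m : {poly Kx}) (P Q : {poly F}) : Prop :=
  (P - Q) %% liftm m = 0.

(* y' = - m_x / m_y in A *)
Definition yprime (m : {poly Kx}) : {poly F} :=
  - (map_poly derivF (liftm m)) * invmod (liftm m)^`() (liftm m).

Definition derA (m : {poly Kx}) (P : {poly F}) : {poly F} :=
  (map_poly derivF P + P^`() * yprime m) %% liftm m.

Definition integralA (m : {poly Kx}) (f : {poly F}) : Prop :=
  exists P : {poly Kx}, P \is monic /\
    eqA m (map_poly (fun p : Kx => (toF p)%:P) P).[f] 0.

Definition basisA (m : {poly Kx}) (n : nat) (W : 'I_n -> {poly F}) : Prop :=
  (forall c : 'I_n -> F, eqA m (\sum_(i < n) c i *: W i) 0 -> forall i, c i = 0)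
  /\ (forall P : {poly F}, exists c : 'I_n -> F, eqA m P (\sum_(i < n) c i *: W i)).

Definition derRel (m : {poly Kx}) (n : nat) (W : 'I_n -> {poly F})
    (e : Kx) (M : 'M[Kx]_n) : Prop :=
  forall i : 'I_n,
    eqA m (toF e *: derA m (W i)) (\sum_(j < n) toF (M i j) *: W j).

Definition coprime_mx (n : nat) (e : Kx) (M : 'M[Kx]_n) : Prop :=
  forall q : Kx, q %| e -> (forall i j, q %| M i j) -> (size q <= 1)%N.

Definition squarefree (p : Kx) : Prop :=
  forall q : Kx, q * q %| p -> (size q <= 1)%N.

Definition suitable (m : {poly Kx}) (n : nat) (W : 'I_n -> {poly F}) : Prop :=
  basisA m W /\ (forall i, integralA m (W i)) /\
  (forall (e : Kx) (M : 'M[Kx]_n), derRel m W e M -> coprime_mx e M -> squarefree e).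

Definition integrableA (m : {poly Kx}) (h : {poly F}) : Prop :=
  exists H : {poly F}, eqA m (derA m H) h.

End AlgFun.

(* Main.v *)
Require Import Defs.
From HB Require Import structures.
From mathcomp Require Import all_boot all_order all_algebra.
From mathcomp Require Import ring.
From Stdlib Require Import Classical.
Import GRing.Theory.
Local Open Scope ring_scope.
Local Open Scope quotient_scope.
Set Implicit Arguments. Unset Strict Implicit.

Lemma frac_repr (R : idomainType) (f : {fraction R}) :
  tofrac (\n_(repr f)) = f * tofrac (\d_(repr f)).
Proof.
rewrite -[X in X * _](reprK f).
set r := repr f.
unlock tofrac.
rewrite [X in _ = X]/GRing.mul /=.
rewrite -FracField.pi_mul.
apply/eqP; rewrite FracField.equivf_def /FracField.mulf /=.
rewrite !numden_Ratio ?oner_neq0 ?mulf_neq0 ?denom_ratioP //.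
- by rewrite mulr1 mul1r.
- exact: oner_neq0.
- exact: oner_neq0.
Qed.

Lemma deriv_neq0 (R : fieldType) (hc : [pchar R] =i pred0) (p : {poly R}) :
  (1 < size p)%N -> p^`() != 0.
Proof.
move=> hs; apply/negP => /eqP H; have := congr1 (fun q : {poly R} => q`_((size p).-2)) H => /=.
rewrite coef_deriv coef0 prednK; last by rewrite -subn1 subn_gt0.
rewrite -mulr_natr => /eqP; rewrite mulf_eq0 (proj1 (pcharf0P _) hc).
have -> : p`_(size p).-1 = lead_coef p by [].
rewrite lead_coef_eq0 -size_poly_eq0; case: (size p) hs => [|[|k]] //.
Qed.

Lemma irred_coprime (R : fieldType) (p q : {poly R}) :
  irreducible_poly p -> ~~ (p %| q) -> coprimep p q.
Proof.
move=> hp hpq; rewrite coprimep_def; apply/negPn/negP => hne.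
have hg := hp _ hne (dvdp_gcdl p q).
move/negP: hpq; apply; rewrite -(eqp_dvdl _ hg); exact: dvdp_gcdr.
Qed.

Lemma irred_coprime_small (R : fieldType) (p q : {poly R}) :
  irreducible_poly p -> q != 0 -> (size q < size p)%N -> coprimep q p.
Proof.
move=> hp hq hs; rewrite coprimep_sym; apply: irred_coprime => //.
apply/negP => /(dvdp_leq hq); rewrite leqNgt hs. by [].
Qed.

Lemma irred_dvdM (R : fieldType) (p x y : {poly R}) :
  irreducible_poly p -> p %| x * y -> (p %| x) || (p %| y).
Proof.
move=> hp h; case hx: (p %| x) => //=.
by rewrite -(Gauss_dvdpr _ (irred_coprime hp (negbT hx))).
Qed.

Section Main.
Variable K : fieldType.
Hypothesis hchar : [pchar K] =i pred0.
Local Notation Kx := {poly K}.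
Local Notation F := {fraction {poly K}}.

Lemma toF_inj : injective (@toF K).
Proof. by move=> a b /eqP; rewrite /toF tofrac_eq => /eqP. Qed.

Lemma toF_eq0 (p : Kx) : (toF p == 0) = (p == 0).
Proof. exact: tofrac_eq0. Qed.

Lemma toF_neq0 (p : Kx) : p != 0 -> toF p != 0.
Proof. by rewrite toF_eq0. Qed.

Lemma charF : [pchar F] =i pred0.
Proof.
apply/pcharf0P => n.
rewrite -(rmorph_nat (@tofrac _)) -/(toF _) toF_eq0 -polyC_natr polyC_eq0.
exact: (proj1 (pcharf0P _) hchar).
Qed.

Lemma frac_repr' (f : F) :
  f = toF (\n_(repr f)) / toF (\d_(repr f)) /\ \d_(repr f) != 0.
Proof.
have hd := denom_ratioP (repr f).
split=> //; rewrite /toF frac_repr mulfK //. exact: toF_neq0.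
Qed.

Lemma derivF_frac (f : F) (a b : Kx) : b != 0 -> f = toF a / toF b ->
  derivF f = toF (a^`() * b - a * b^`()) / toF (b ^+ 2).
Proof.
move=> hb hf; rewrite /derivF.
have [hr hd] := frac_repr' f.
move: hr hd; set n := \n_(repr f); set dd := \d_(repr f) => hr hd.
have E : a * dd - n * b = 0.
  apply: toF_inj; rewrite /toF rmorphB !rmorphM /= rmorph0 -!/(toF _).
  rewrite hr in hf; move: hf => /eqP; rewrite eqr_div ?toF_neq0 // => /eqP ->.
  by rewrite subrr.
have E' : (a * dd - n * b)^`() = 0 by rewrite E deriv0.
rewrite derivB !derivM in E'.
apply/eqP; rewrite eqr_div ?toF_neq0 ?expf_neq0 //.
rewrite /toF -!rmorphM; apply/eqP; congr tofrac.
apply/eqP; rewrite -subr_eq0; apply/eqP.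
transitivity ((b^`() * dd + b * dd^`()) * (a * dd - n * b) - b * dd * (a^`() * dd + a * dd^`() - (n^`() * b + n * b^`()))).
  clearbody n dd; ring.
by rewrite E E' !mulr0 subrr.
Qed.

Lemma frac_ex (f : F) : exists a b : Kx, b != 0 /\ f = toF a / toF b.
Proof. have [h1 h2] := frac_repr' f; by exists (\n_(repr f)), (\d_(repr f)). Qed.

Lemma gfadd (L : fieldType) (A B C D : L) : B != 0 -> D != 0 ->
  A / B + C / D = (A * D + C * B) / (B * D).
Proof. by move=> hB hD; field; rewrite hB hD. Qed.

Lemma gfmul (L : fieldType) (A B C D : L) :
  (A / B) * (C / D) = (A * C) / (B * D).
Proof. by rewrite invfM mulrACA. Qed.

Lemma frac_add (X Y Z W : Kx) : Y != 0 -> W != 0 ->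
  toF X / toF Y + toF Z / toF W = toF (X * W + Z * Y) / toF (Y * W).
Proof.
move=> hY hW; rewrite gfadd ?toF_neq0 //.
by rewrite /toF tofracD [tofrac (X * W)]tofracM [tofrac (Z * Y)]tofracM [tofrac (Y * W)]tofracM.
Qed.

Lemma frac_mul (X Y Z W : Kx) :
  (toF X / toF Y) * (toF Z / toF W) = toF (X * Z) / toF (Y * W).
Proof. by rewrite gfmul /toF [tofrac (X * Z)]tofracM [tofrac (Y * W)]tofracM. Qed.

Lemma frac_eq (X Y P Q : Kx) : Y != 0 -> Q != 0 -> X * Q = P * Y ->
  toF X / toF Y = toF P / toF Q.
Proof.
move=> hY hQ hE; apply/eqP; rewrite eqr_div ?toF_neq0 //.
by rewrite /toF -[_ * tofrac Q]tofracM -[_ * tofrac Y]tofracM hE.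
Qed.

Lemma derivF_add (f g : F) : derivF (f + g) = derivF f + derivF g.
Proof.
have [a [b [hb hf]]] := frac_ex f; have [c [d [hd hg]]] := frac_ex g.
rewrite (derivF_frac hb hf) (derivF_frac hd hg).
have hfg : f + g = toF (a*d + c*b) / toF (b*d) by rewrite hf hg frac_add.
rewrite (derivF_frac _ hfg) ?mulf_neq0 // frac_add ?expf_neq0 //.
apply: frac_eq; rewrite ?mulf_neq0 ?expf_neq0 //.
rewrite !(derivD, derivM). ring.
Qed.

Lemma derivF_mul (f g : F) : derivF (f * g) = derivF f * g + f * derivF g.
Proof.
have [a [b [hb hf]]] := frac_ex f; have [c [d [hd hg]]] := frac_ex g.
rewrite (derivF_frac hb hf) (derivF_frac hd hg).
have hfg : f * g = toF (a*c) / toF (b*d) by rewrite hf hg frac_mul.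
rewrite (derivF_frac _ hfg) ?mulf_neq0 // hf hg !frac_mul frac_add ?mulf_neq0 ?expf_neq0 //.
apply: frac_eq; rewrite ?mulf_neq0 ?expf_neq0 //.
rewrite !(derivD, derivM). ring.
Qed.

Lemma derivF0 : derivF (0 : F) = 0.
Proof.
have h := derivF_add 0 0; rewrite addr0 in h.
have : derivF (0 : F) + derivF 0 - derivF 0 = derivF 0 - derivF 0 by rewrite -h.
by rewrite addrK subrr.
Qed.

Lemma derivFN (f : F) : derivF (- f) = - derivF f.
Proof.
apply/eqP; rewrite -addr_eq0 -derivF_add addNr. by rewrite derivF0.
Qed.

Lemma derivF_sum (I : Type) (r : seq I) (P : pred I) (G : I -> F) :
  derivF (\sum_(i <- r | P i) G i) = \sum_(i <- r | P i) derivF (G i).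
Proof. exact: (big_morph _ derivF_add derivF0). Qed.

Lemma invmodP (a mm : {poly F}) : coprimep a mm ->
  exists u, a * invmod a mm = 1 + u * mm.
Proof.
move=> hc; rewrite /invmod.
have h := egcdpE a mm.
set e := egcdp a mm in h *.
have /size_poly1P [c hc0 hC] : size (e.1 * a + e.2 * mm) == 1%N.
  by rewrite -(eqp_size h) coprimep_size_gcd.
rewrite hC coefC eqxx /=. exists (- (c^-1%:P * e.2)).
have E : e.1 * a = c%:P - e.2 * mm by rewrite -hC addrK.
rewrite -mul_polyC.
transitivity (c^-1%:P * (e.1 * a)); first by ring.
rewrite E mulrBr -polyCM mulVf //. ring.
Qed.


Local Notation D := (map_poly (@derivF K)).

Lemma coefDF (P : {poly F}) i : (D P)`_i = derivF P`_i.
Proof. by rewrite coef_map_id0 // derivF0. Qed.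

Lemma D_add (P Q : {poly F}) : D (P + Q) = D P + D Q.
Proof. by apply/polyP => i; rewrite coefD !coefDF coefD derivF_add. Qed.

Lemma D0 : D 0 = 0.
Proof. exact: map_poly0. Qed.

Lemma D_opp (P : {poly F}) : D (- P) = - D P.
Proof. by apply/polyP => i; rewrite coefN !coefDF coefN derivFN. Qed.

Lemma D_scale (c : F) (P : {poly F}) : D (c *: P) = derivF c *: P + c *: D P.
Proof. by apply/polyP => i; rewrite coefD !coefZ !coefDF coefZ derivF_mul. Qed.

Lemma D_mul (P Q : {poly F}) : D (P * Q) = D P * Q + P * D Q.
Proof.
apply/polyP => i; rewrite coefD !coefM coefDF coefM derivF_sum -big_split.
by apply: eq_bigr => j _; rewrite derivF_mul !coefDF.
Qed.

Variable m : {poly Kx}.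
Hypothesis hirr : irreducible_poly (liftm m).
Local Notation lm := (liftm m).

Lemma derA_add (P Q : {poly F}) : derA m (P + Q) = derA m P + derA m Q.
Proof.
by rewrite /derA D_add derivD mulrDl -modpD addrACA.
Qed.

Lemma derA0 : derA m 0 = 0.
Proof. by rewrite /derA D0 deriv0 mul0r addr0 mod0p. Qed.

Lemma derA_sum (I : Type) (r : seq I) (P : pred I) (G : I -> {poly F}) :
  derA m (\sum_(i <- r | P i) G i) = \sum_(i <- r | P i) derA m (G i).
Proof. exact: (big_morph _ derA_add derA0). Qed.

Lemma derA_scale (c : F) (P : {poly F}) :
  derA m (c *: P) = derivF c *: (P %% lm) + c *: derA m P.
Proof.
by rewrite /derA D_scale derivZ -scalerAl -addrA -scalerDr modpD !modpZl.
Qed.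

Lemma charF' : [pchar F] =i pred0.
Proof. exact: charF. Qed.

Lemma derA_mul_lm (Q : {poly F}) : derA m (Q * lm) = 0.
Proof.
have hlm := irredp_neq0 hirr.
have hs : (1 < size lm)%N := hirr.1.
have hco : coprimep lm^`() lm.
  apply: irred_coprime_small => //; first by have := deriv_neq0 charF hs.
  by have := lt_size_deriv hlm.
have [u hu] := invmodP hco.
rewrite /derA /yprime; set i := invmod _ _ in hu *.
rewrite D_mul derivM.
set y := - D lm * i.
have -> : D Q * lm + Q * D lm + (Q^`() * lm + Q * lm^`()) * y
   = (D Q + Q^`() * y - Q * D lm * u) * lm + Q * D lm * ((1 + u * lm) - lm^`() * i).
  rewrite /y; ring.
by rewrite -hu subrr mulr0 addr0 modp_mull.
Qed.

Lemma derA_eq (P Q : {poly F}) : (P - Q) %% lm = 0 -> derA m P = derA m Q.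
Proof.
move=> h.
have -> : P = Q + ((P - Q) %/ lm) * lm.
  have e := divp_eq (P - Q) lm; rewrite h addr0 in e.
  by rewrite -e addrC subrK.
by rewrite derA_add derA_mul_lm addr0.
Qed.


Lemma modpB' (P Q d : {poly F}) : (P - Q) %% d = P %% d - Q %% d.
Proof. by rewrite modpD modpN. Qed.

Lemma modp_sum (d : {poly F}) (I : Type) (r : seq I) (G : I -> {poly F}) :
  (\sum_(i <- r) G i) %% d = \sum_(i <- r) (G i %% d).
Proof. exact: (big_morph (fun x => x %% d) (fun x y => modpD d x y) (mod0p d)). Qed.

Lemma eq_mod (P Q d : {poly F}) : (P - Q) %% d = 0 -> P %% d = Q %% d.
Proof. by rewrite modpB' => /eqP; rewrite subr_eq0 => /eqP. Qed.

Lemma coef_eqn (n : nat) (W : 'I_n -> {poly F}) (hb : basisA m W)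
  (e : Kx) (M : 'M[Kx]_n) (he : e != 0) (hrel : derRel m W e M)
  (c hc : 'I_n -> F) (H : {poly F})
  (hH : (H - \sum_(i < n) c i *: W i) %% lm = 0)
  (hint : eqA m (derA m H) (\sum_(i < n) hc i *: W i)) :
  forall j, hc j = derivF (c j) + (\sum_(i < n) c i * toF (M i j)) / toF e.
Proof.
have he' := toF_neq0 he.
set coef := fun j => derivF (c j) + (\sum_(i < n) c i * toF (M i j)) / toF e.
have hT : (\sum_(j < n) coef j *: W j) %% lm = derA m (\sum_(i < n) c i *: W i).
  rewrite derA_sum modp_sum.
  rewrite /coef.
  under eq_bigr do rewrite scalerDl modpD.
  rewrite big_split /=.
  under [X in _ + X = _]eq_bigr do rewrite mulr_suml scaler_suml modp_sum.
  rewrite (exchange_big) /= -big_split /=.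
  apply: eq_bigr => i _.
  rewrite derA_scale modpZl.
  congr (_ + _).
  have hr := eq_mod (hrel i).
  have hid : derA m (W i) %% lm = derA m (W i) by rewrite /derA modp_id.
  rewrite modpZl hid in hr.
  transitivity ((c i / toF e) *: ((\sum_(j < n) toF (M i j) *: W j) %% lm)).
    rewrite modp_sum scaler_sumr; apply: eq_bigr => j _.
    by rewrite !modpZl scalerA mulrAC.
  by rewrite -hr scalerA divfK.
have hder := derA_eq hH.
move: hint; rewrite /eqA hder -hT modpB' modp_id -modpB' -sumrB.
under eq_bigr do rewrite -scalerBl.
move=> h j.
have h2 : eqA m (\sum_(i < n) (coef i - hc i) *: W i) 0 by rewrite /eqA subr0.
have := (proj1 hb) _ h2 j => /= /eqP; rewrite subr_eq0 => /eqP h3.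
by rewrite -h3.
Qed.


Lemma irr_factor (d : Kx) : (1 < size d)%N -> exists p : Kx, irreducible_poly p /\ p %| d.
Proof.
move: {2}(size d).+1 (ltnSn (size d)) => N; elim: N d => // N IH d hN hd.
destruct (classic (irreducible_poly d)) as [hi|hni].
  by exists d; split=> //; exact: dvdpp.
have [q hq] : exists q : Kx, ~ (size q != 1%N -> q %| d -> q %= d).
  apply: not_all_ex_not => hall; apply: hni; split=> //.
have hq1 : size q != 1%N.
  by apply/negP => h; apply: hq => h'; rewrite h in h'.
have hqd : q %| d.
  by apply/negPn/negP => h; apply: hq => _ h'; rewrite h' in h.
have hqe : ~~ (q %= d) by apply/negP => h; apply: hq => _ _; exact: h.
have hd0 : d != 0 by rewrite -size_poly_eq0; case: (size d) hd.
have hq0 : q != 0 by apply/eqP => h; move: hqd; rewrite h dvd0p (negPf hd0).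
have hsq : (size q < size d)%N.
  rewrite ltn_neqAle (dvdp_leq hd0 hqd) andbT.
  by rewrite (dvdp_size_eqp hqd).
have hq2 : (1 < size q)%N.
  move: hq0 hq1; rewrite -size_poly_eq0; case: (size q) => [|[|k]] //.
have [p [hp hpq]] := IH q (leq_trans hsq (hN : (size d < N.+1)%N)) hq2.
by exists p; split=> //; exact: dvdp_trans hpq hqd.
Qed.

Lemma factor_p (p B : Kx) : (1 < size p)%N -> B != 0 ->
  exists k (g : Kx), g != 0 /\ ~~ (p %| g) /\ B = p ^+ k * g.
Proof.
move=> hp; move: {2}(size B).+1 (ltnSn (size B)) => N; elim: N B => // N IH B hN hB.
case hd: (p %| B); last first.
  by exists 0%N, B; rewrite expr0 mul1r hd.
have [B1 hB1] := dvdpP _ _ hd.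
have hB10 : B1 != 0 by apply/eqP => h; move: hB; rewrite hB1 h mul0r eqxx.
have hp0 : p != 0 by rewrite -size_poly_eq0; case: (size p) hp.
have hs : (size B1 < size B)%N.
  rewrite hB1 size_mul //; case: (size p) hp => [|[|k]] // _.
  by rewrite !addnS /= ltnS leq_addr.
have [k [g [hg [hpg hE]]]] := IH B1 (leq_trans hs hN) hB10.
by exists k.+1, g; split=> //; split=> //; rewrite hB1 hE exprS; ring.
Qed.

Lemma frac_eq_inv (X Y P Q : Kx) : Y != 0 -> Q != 0 ->
  toF X / toF Y = toF P / toF Q -> X * Q = P * Y.
Proof.
move=> hY hQ /eqP; rewrite eqr_div ?toF_neq0 //.
by rewrite /toF -[_ * tofrac Q]tofracM -[_ * tofrac Y]tofracM => /eqP /toF_inj.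
Qed.

Lemma common_den (n : nat) (c : 'I_n -> F) :
  exists (a : 'I_n -> Kx) (B : Kx), B != 0 /\ forall i, c i = toF (a i) / toF B.
Proof.
pose num i := \n_(repr (c i)); pose den i := \d_(repr (c i)).
have hden i : den i != 0 by exact: (frac_repr' (c i)).2.
exists (fun i => num i * \prod_(j < n | j != i) den j), (\prod_(j < n) den j).
have hB : \prod_(j < n) den j != 0 by apply/prodf_neq0 => j _; exact: hden.
have hB' i : \prod_(j < n | j != i) den j != 0 by apply/prodf_neq0 => j _; exact: hden.
split=> //.
move=> i; rewrite {1}((frac_repr' (c i)).1) -/(num i) -/(den i).
apply: frac_eq => //.
rewrite [\prod_(j < n) den j](bigD1 i) //=; ring.
Qed.

Lemma reduce_k (n : nat) (c : 'I_n -> F) (p g : Kx) : p != 0 -> g != 0 ->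
  forall k (a : 'I_n -> Kx), (forall i, c i = toF (a i) / toF (p ^+ k * g)) ->
  exists k' (a' : 'I_n -> Kx), (forall i, c i = toF (a' i) / toF (p ^+ k' * g)) /\
     (k' = 0%N \/ exists j, ~~ (p %| a' j)).
Proof.
move=> hp hg; elim=> [|k IH] a ha; first by exists 0%N, a; split=> //; left.
case: (boolP [forall j, p %| a j]) => hall; last first.
  move/forallPn: hall => [j hj]; exists k.+1, a; split=> //; right; by exists j.
apply: (IH (fun i => a i %/ p)) => i.
rewrite ha; apply: frac_eq; rewrite ?mulf_neq0 ?expf_neq0 //.
have E := divpK (forallP hall i).
rewrite -{1}E exprS; ring.
Qed.


Lemma poly_eqn (hs d e a B S : Kx) : d != 0 -> e != 0 -> B != 0 ->
  toF hs / toF (d * e) = derivF (toF a / toF B) + (toF S / toF B) / toF e ->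
  hs * B ^+ 2 = (a^`() * B - a * B^`()) * d * e + S * d * B.
Proof.
move=> hd he hB.
rewrite (derivF_frac hB erefl).
have -> : (toF S / toF B) / toF e = toF S / toF (B * e).
  by rewrite /toF [tofrac (B * e)]tofracM invfM mulrA.
rewrite frac_add ?expf_neq0 ?mulf_neq0 //.
move/(frac_eq_inv (mulf_neq0 hd he) (mulf_neq0 (expf_neq0 2 hB) (mulf_neq0 hB he))) => E.
apply: (mulIf (mulf_neq0 hB he)).
transitivity (hs * (B ^+ 2 * (B * e))); first by ring.
rewrite E; ring.
Qed.

Lemma sum_conv (n : nat) (a : 'I_n -> Kx) (B : Kx) (M : 'I_n -> Kx) :
  \sum_(i < n) (toF (a i) / toF B) * toF (M i) = toF (\sum_(i < n) a i * M i) / toF B.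
Proof.
rewrite /toF (big_morph _ (@tofracD _) (@tofrac0 _)) mulr_suml.
by apply: eq_bigr => i _; rewrite tofracM mulrAC.
Qed.

End Main.

Lemma ring_trans (R : comRingType) (x y u v : R) : u = v -> x - y = u - v -> x = y.
Proof. by move=> -> /eqP; rewrite subrr subr_eq0 => /eqP. Qed.

Lemma irred_ndvdM (R : fieldType) (p x y : {poly R}) :
  irreducible_poly p -> ~~ (p %| x) -> ~~ (p %| y) -> ~~ (p %| x * y).
Proof. by move=> hp hx hy; apply/negP => /(irred_dvdM hp); rewrite (negPf hx) (negPf hy). Qed.

Lemma ndvd_small (R : fieldType) (p q : {poly R}) :
  q != 0 -> (size q < size p)%N -> ~~ (p %| q).
Proof. by move=> hq hs; apply/negP => /(dvdp_leq hq); rewrite leqNgt hs. Qed.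


Unset Implicit Arguments.
Local Open Scope ring_scope.

Theorem theorem8 (K : fieldType) (hchar : [pchar K] =i pred0)
  (m : {poly {poly K}}) (n : nat)
  (hirr : irreducible_poly (liftm m)) (hn : (size m).-1 = n)
  (W : 'I_n -> {poly {fraction {poly K}}}) (hW : suitable m W)
  (e : {poly K}) (M : 'M[{poly K}]_n)
  (hrel : derRel m W e M) (hgcd : coprime_mx e M)
  (hs : 'I_n -> {poly K}) (d : {poly K})
  (hde : coprimep d e)
  (hhd : forall q : {poly K}, q %| d -> (forall i, q %| hs i) -> (size q <= 1)%N)
  (hsqf : squarefree d) :
  integrableA m (\sum_(i < n) (toF (hs i) / toF (d * e)) *: W i) ->
  (size d <= 1)%N.
Proof.
move=> [H hH].
case: (leqP (size d) 1) => // hd1.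
exfalso.
have hd0 : d != 0 by rewrite -size_poly_eq0; case: (size d) hd1.
have he0 : e != 0.
  apply/eqP => he; move: hde; rewrite he coprimep0 => /eqp_size.
  by rewrite size_poly1 => h; rewrite h in hd1.
have [p [hp hpd]] := irr_factor hd1.
have hp1 : (1 < size p)%N := hp.1.
have hp0 : p != 0 := irredp_neq0 hp.
have [d0 hd0E] := dvdpP _ _ hpd.
have hd00 : d0 != 0 by apply/eqP => h; move: hd0; rewrite hd0E h mul0r eqxx.
have hpd0 : ~~ (p %| d0).
  apply/negP => h; have := hsqf p; rewrite hd0E => /(_ (dvdp_mul h (dvdpp p))).
  by rewrite leqNgt hp1.
have hpe : ~~ (p %| e).
  apply/negP => h.
  have h1 : coprimep p e := coprimep_dvdr hpd hde.
  have := coprimep_dvdl h h1; rewrite coprimepp => /eqP hs1.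
  by rewrite hs1 in hp1.
have [c hc] := (proj2 (proj1 hW)) H.
have [a0 [B0 [hB0 hca0]]] := common_den c.
have [k [g [hg [hpg hB0E]]]] := factor_p hp1 hB0.
have [k' [a [hca hk]]] := @reduce_k K n c p g hp0 hg k a0 (fun i => etrans (hca0 i) (congr1 (fun z => toF (a0 i) / toF z) hB0E)).
have hcoef := coef_eqn hchar hirr (proj1 hW) he0 hrel hc hH.
case: k' hca hk => [|k''] hca hk.
  set B := p ^+ 0 * g in hca.
  have hB : B != 0 by rewrite mulf_neq0 ?expf_neq0.
  have E j : hs j * B ^+ 2 = ((a j)^`() * B - a j * B^`()) * d * e
       + (\sum_(i < n) a i * M i j) * d * B.
    apply: poly_eqn => //.
    rewrite (hcoef j) hca.
    under eq_bigr => i _ do rewrite hca.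
    by rewrite sum_conv.
  have hpB : ~~ (p %| B) by rewrite /B expr0 mul1r.
  suff : (size p <= 1)%N by rewrite leqNgt hp1.
  apply: hhd => // i.
  have : p %| hs i * B ^+ 2.
    rewrite E hd0E.
    set X := (_ * _ - _).
    have -> : X * (d0 * p) * e + (\sum_(i0 < n) a i0 * M i0 i) * (d0 * p) * B
       = (X * d0 * e + (\sum_(i0 < n) a i0 * M i0 i) * d0 * B) * p by ring.
    exact: dvdp_mull (dvdpp p).
  move/(irred_dvdM hp) => /orP [] // h.
  by move: (irred_ndvdM hp hpB hpB); rewrite -expr2 h.
case: hk => [//|[j0 hj]].
set B := p ^+ k''.+1 * g in hca.
have hB : B != 0 by rewrite mulf_neq0 ?expf_neq0.
have E j : hs j * B ^+ 2 = ((a j)^`() * B - a j * B^`()) * d * e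
     + (\sum_(i < n) a i * M i j) * d * B.
  apply: poly_eqn => //.
  rewrite (hcoef j) hca.
  under eq_bigr => i _ do rewrite hca.
  by rewrite sum_conv.
have Ej := E j0.
rewrite /B derivM deriv_exp /= -mulr_natr hd0E [p ^+ k''.+1]exprS in Ej.
move: Ej.
set t := p ^+ k''. have ht0 : t != 0 by rewrite /t expf_neq0.
set N := (k''.+1)%:R : {poly K}.
have hN0 : N != 0.
  by rewrite /N -polyC_natr polyC_eq0 (proj1 (pcharf0P _) hchar).
have hsN : (size N < size p)%N.
  by rewrite /N -polyC_natr size_polyC -polyC_eq0 polyC_natr -/N hN0.
have hNp := ndvd_small hN0 hsN.
set S := \sum_(i < n) a i * M i j0. set A := a j0. set A' := (a j0)^`().
have hA : ~~ (p %| A) by rewrite /A.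
move=> Ej; clearbody t N S A A'.
have E2 : (p * t) * (hs j0 * p * t * g ^+ 2) = (p * t) * ((A' * p * g - A * N * p^`() * g - A * p * g^`()) * d0 * e + S * p * d0 * g).
  by apply: (ring_trans Ej); ring.
have E3 := mulfI (mulf_neq0 hp0 ht0) E2.
have E4 : A * N * p^`() * g * d0 * e = p * (A' * g * d0 * e - A * g^`() * d0 * e + S * d0 * g - hs j0 * t * g ^+ 2).
  by apply: (ring_trans E3); ring.
have hp'p : ~~ (p %| p^`()).
  exact: ndvd_small (deriv_neq0 hchar hp1) (lt_size_deriv hp0).
have : p %| A * N * p^`() * g * d0 * e by rewrite E4; exact: dvdp_mulr _ (dvdpp p).
apply/negP.
do 5 apply: irred_ndvdM => //.
Qed.
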